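(* Let $T$ be a split Leibniz triple system with symmetric root system $\Lambda^1$, suppose $\Lambda^0$ is symmetric, and fix $\alpha_0\in\Lambda^1$. Let $\alpha\in\Lambda^1_{\alpha_0}$ and $\beta,\gamma\in\Lambda^1\cup\{0\}$. Then: (1) if $\{T_\alpha,T_\beta,T_\gamma\}\neq0$ then $\beta,\gamma,\alpha+\beta+\gamma\in\Lambda^1_{\alpha_0}\cup\{0\}$; (2) if $\{T_\beta,T_\alpha,T_\gamma\}\neq0$ then $\beta,\gamma,\beta+\alpha+\gamma\in\Lambda^1_{\alpha_0}\cup\{0\}$; (3) if $\{T_\beta,T_\gamma,T_\alpha\}\neq0$ then $\beta,\gamma,\beta+\gamma+\alpha\in\Lambda^1_{\alpha_0}\cup\{0\}$.
   Context: A Leibniz triple system is a vector space $T$ over a field $\mathbb{K}$ with a trilinear product $\{\cdot,\cdot,\cdot\}$ satisfying, for all $a,b,c,d,e\in T$: $\{a,\{b,c,d\},e\}=\{\{a,b,c\},d,e\}-\{\{a,c,b\},d,e\}-\{\{a,d,b\},c,e\}+\{\{a,d,c\},b,e\}$ and $\{a,b,\{c,d,e\}\}=\{\{a,b,c\},d,e\}-\{\{a,b,d\},c,e\}-\{\{a,b,e\},c,d\}+\{\{a,b,e\},d,c\}$. Its standard embedding is the right Leibniz algebra $L=L^0\oplus L^1$ ($L^0$ the span of symbols $x\otimes y$, $L^1=T$) with product $[(x\otimes y,z),(u\otimes v,w)]=(\{x,y,u\}\otimes v-\{x,y,v\}\otimes u+z\otimes w,\ \{x,y,w\}+\{z,u,v\}-\{z,v,u\})$;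 so $[x,y]=x\otimes y$ and $\{x,y,z\}=[[x,y],z]$ for $x,y,z\in T$. Let $H^0$ be a maximal abelian subalgebra of $L^0$; for $\alpha\in(H^0)^*$ put $T_\alpha=\{t\in T:[t,h]=\alpha(h)t\ \forall h\in H^0\}$, $L^0_\alpha=\{v\in L^0:[v,h]=\alpha(h)v\ \forall h\in H^0\}$, $\Lambda^1=\{\alpha\neq0:T_\alpha\neq0\}$, $\Lambda^0=\{\alpha\neq0:L^0_\alpha\neq0\}$. $T$ is split (w.r.t. $H^0$) if $T=T_0\oplus\bigoplus_{\alpha\in\Lambda^1}T_\alpha$, $\{T_0,T_0,T_0\}=0$ and $\{T_\alpha,T_{-\alpha},T_0\}=0$ for all $\alpha\in\Lambda^1$. A set $\Lambda\subset(H^0)^*$ is symmetric if $\alpha\in\Lambda$ implies $-\alpha\in\Lambda$. Two roots $\alpha,\beta\in\Lambda^1$ are connected if there is a family $\alpha_1,\dots,\alpha_{2n+1}\in\Lambda^1\cup\{0\}$ with: $\alpha_1+\dots+\alpha_{2k+1}\in\Lambda^1$ for $k=0,\dots,n$; $\alpha_1+\dots+\alpha_{2k}\in\Lambda^0$ for $k=1,\dots,n$; $\alpha_1=\alpha$ and $\alpha_1+\dots+\alpha_{2n+1}\in\{\beta,-\beta\}$. $\Lambda^1_{\alpha_0}$ denotes the set of $\beta\in\Lambda^1$ connected with $\alpha_0$. *)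

(* Defs.v *)
From HB Require Import structures.
From mathcomp Require Import all_boot all_order all_algebra.
Set Implicit Arguments. Unset Strict Implicit. Unset Printing Implicit Defensive.
Import GRing.Theory.
Local Open Scope ring_scope.

Definition trilinear (K : fieldType) (T : lmodType K) (tp : T -> T -> T -> T) :=
  [/\ forall (k : K) x y b c, tp (k *: x + y) b c = k *: tp x b c + tp y b c,
      forall (k : K) a x y c, tp a (k *: x + y) c = k *: tp a x c + tp a y c
    & forall (k : K) a b x y, tp a b (k *: x + y) = k *: tp a b x + tp a b y].

Definition LTS (K : fieldType) (T : lmodType K) (tp : T -> T -> T -> T) :=
  [/\ trilinear tp,
      forall a b c d e, tp a (tp b c d) e =
        tp (tp a b c) d e - tp (tp a c b) d e - tp (tp a d b) c e + tp (tp a d c) b e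
    & forall a b c d e, tp a b (tp c d e) =
        tp (tp a b c) d e - tp (tp a b d) c e - tp (tp a b e) c d + tp (tp a b e) d c].

(* An element of L^0 is written as a formal finite sum  sum_i x_i (x) y_i,
   represented by the list of pairs [:: (x_i, y_i)].  Two formal sums are the
   same element of L^0 iff they act identically on T = L^1 from both sides. *)

Section L0.
Variables (K : fieldType) (T : lmodType K) (tp : T -> T -> T -> T).

Definition L0 := seq (T * T).

(* [v, w] for v in L^0, w in T  :  [x(x)y, w] = {x,y,w} *)
Definition actl (v : L0) (w : T) : T := \sum_(p <- v) tp p.1 p.2 w.
(* [w, v] for w in T, v in L^0  :  [w, x(x)y] = {w,x,y} - {w,y,x} *)
Definition actr (w : T) (v : L0) : T := \sum_(p <- v) (tp w p.1 p.2 - tp w p.2 p.1).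

Definition L0eq (v v' : L0) : Prop :=
  forall z, actl v z = actl v' z /\ actr z v = actr z v'.

(* the product on L^0 : [x(x)y, u(x)v] = {x,y,u}(x)v - {x,y,v}(x)u, extended bilinearly *)
Definition br0 (v v' : L0) : L0 :=
  flatten [seq [:: (tp p.1 p.2 q.1, q.2); (- tp p.1 p.2 q.2, q.1)] | p <- v, q <- v'].

Definition scl (c : K) (v : L0) : L0 := [seq (c *: p.1, p.2) | p <- v].
Definition addL0 (v v' : L0) : L0 := v ++ v'.

Definition subalg (H : L0 -> Prop) :=
  [/\ H [::],
      forall v v', H v -> H v' -> H (addL0 v v'),
      forall c v, H v -> H (scl c v),
      forall v v', H v -> L0eq v v' -> H v'
    & forall v v', H v -> H v' -> H (br0 v v')].

Definition abelian (H : L0 -> Prop) := forall h h', H h -> H h' -> L0eq (br0 h h') [::].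

Definition max_abelian (H : L0 -> Prop) :=
  [/\ subalg H, abelian H &
      forall H', subalg H' -> abelian H' -> (forall v, H v -> H' v) -> forall v, H' v -> H v].

(* elements of (H^0)^* : functions L0 -> K, linear and well defined on H;
   two of them are equal iff they agree on H. *)
Variable H : L0 -> Prop.

Definition dual (al : L0 -> K) :=
  [/\ forall h h', H h -> L0eq h h' -> al h = al h',
      forall h h', H h -> H h' -> al (addL0 h h') = al h + al h'
    & forall c h, H h -> al (scl c h) = c * al h].

Definition feq (al be : L0 -> K) := forall h, H h -> al h = be h.
Definition zero_rt : L0 -> K := fun _ => 0.
Definition add_rt (al be : L0 -> K) : L0 -> K := fun h => al h + be h.
Definition opp_rt (al : L0 -> K) : L0 -> K := fun h => - al h.
Definition nonzero_rt (al : L0 -> K) := exists h, H h /\ al h != 0.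

Definition Tw (al : L0 -> K) (t : T) := forall h, H h -> actr t h = al h *: t.
Definition Lw (al : L0 -> K) (v : L0) := forall h, H h -> L0eq (br0 v h) (scl (al h) v).

Definition Lam1 (al : L0 -> K) :=
  [/\ dual al, nonzero_rt al & exists t, t != 0 /\ Tw al t].
Definition Lam0 (al : L0 -> K) :=
  [/\ dual al, nonzero_rt al & exists v, ~ L0eq v [::] /\ Lw al v].
Definition Lam1z (al : L0 -> K) := Lam1 al \/ feq al zero_rt.

(* partial sums  a_0 + ... + a_(k-1)  (the paper's alpha_1 + ... + alpha_k) *)
Definition psum (a : nat -> L0 -> K) (k : nat) : L0 -> K :=
  fun h => \sum_(i < k) a i h.

(* connectedness of roots; a i is the paper's alpha_(i+1) *)
Definition connected (al be : L0 -> K) :=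
  exists (n : nat) (a : nat -> L0 -> K),
    [/\ forall i, (i <= n.*2)%N -> Lam1z (a i),
        forall k, (k <= n)%N -> Lam1 (psum a (k.*2.+1)),
        forall k, (1 <= k <= n)%N -> Lam0 (psum a (k.*2)),
        feq (a 0%N) al
      & feq (psum a (n.*2.+1)) be \/ feq (psum a (n.*2.+1)) (opp_rt be)].

Definition Lam1_conn (al0 be : L0 -> K) := Lam1 be /\ connected al0 be.

Definition split_wrt :=
  [/\ max_abelian H,
      forall t : T, exists (n : nat) (al : 'I_n -> L0 -> K) (ts : 'I_n -> T),
         t = \sum_(i < n) ts i /\
         forall i, (feq (al i) zero_rt \/ Lam1 (al i)) /\ Tw (al i) (ts i),
      forall a b c, Tw zero_rt a -> Tw zero_rt b -> Tw zero_rt c -> tp a b c = 0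
    & forall al a b c, Lam1 al -> Tw al a -> Tw (opp_rt al) b -> Tw zero_rt c -> tp a b c = 0].

Definition prod_nz (al be ga : L0 -> K) :=
  exists a b c, [/\ Tw al a, Tw be b, Tw ga c & tp a b c != 0].

End L0.

(* Main.v *)
Require Import Defs.
From HB Require Import structures.
From mathcomp Require Import all_boot all_order all_algebra.
From Stdlib Require Import Classical.
From mathcomp Require Import zify.
From Stdlib Require Import Lia.
From mathcomp Require Import ring.
Set Implicit Arguments. Unset Strict Implicit. Unset Printing Implicit Defensive.
Import GRing.Theory.
Local Open Scope ring_scope.

Section Lin.
Variables (K : fieldType) (T : lmodType K).

Lemma linfacts (f : T -> T) : (forall (k:K) x y, f (k *: x + y) = k *: f x + f y) ->
  [/\ f 0 = 0, forall x y, f (x + y) = f x + f y, forall x, f (- x) = - f x,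
      forall k x, f (k *: x) = k *: f x &
      forall I (s : seq I) (F : I -> T), f (\sum_(i <- s) F i) = \sum_(i <- s) f (F i)].
Proof.
move=> hf.
have f0 : f 0 = 0.
  have e := hf 1 0 0; rewrite scaler0 addr0 scale1r in e.
  by apply: (@addrI _ (f 0)); rewrite addr0 -e.
have fD : forall x y, f (x + y) = f x + f y by move=> x y; have := hf 1 x y; rewrite !scale1r.
have fZ : forall k x, f (k *: x) = k *: f x by move=> k x; have := hf k x 0; rewrite !addr0 f0 addr0.
split=> //.
- by move=> x; rewrite -scaleN1r fZ scaleN1r.
- move=> I s F; elim: s => [|i s IH]; first by rewrite !big_nil.
  by rewrite !big_cons fD IH.
Qed.
End Lin.


Ltac canc1 := lazymatch goal with
 | |- - ?t + ?r = _ => first [ rewrite addKr | rewrite addNKr | rewrite (addrCA _ t) ]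
 | |- ?t + ?r = _ => first [ rewrite addNKr | rewrite addKr | rewrite (addrCA _ (- t)) ]
 end.
Ltac zsolve := apply/eqP; rewrite -subr_eq0; apply/eqP;
  rewrite -[LHS]addr0 ?opprD ?opprK -?addrA; repeat canc1; try reflexivity.

Section TP.
Variables (K : fieldType) (T : lmodType K) (tp : T -> T -> T -> T).
Hypothesis hLTS : LTS tp.

Let htri : trilinear tp. Proof. by case: hLTS. Qed.
Let I1 : forall a b c d e, tp a (tp b c d) e =
        tp (tp a b c) d e - tp (tp a c b) d e - tp (tp a d b) c e + tp (tp a d c) b e.
Proof. by case: hLTS. Qed.
Let I2 : forall a b c d e, tp a b (tp c d e) =
        tp (tp a b c) d e - tp (tp a b d) c e - tp (tp a b e) c d + tp (tp a b e) d c.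
Proof. by case: hLTS. Qed.

Lemma lin1 b c : [/\ tp 0 b c = 0, forall x y, tp (x + y) b c = tp x b c + tp y b c,
   forall x, tp (- x) b c = - tp x b c, forall k x, tp (k *: x) b c = k *: tp x b c &
   forall I (s : seq I) (F : I -> T), tp (\sum_(i <- s) F i) b c = \sum_(i <- s) tp (F i) b c].
Proof. case: htri => h _ _; exact: (@linfacts _ _ (fun x => tp x b c) (fun k x y => h k x y b c)). Qed.
Lemma lin2 a c : [/\ tp a 0 c = 0, forall x y, tp a (x + y) c = tp a x c + tp a y c,
   forall x, tp a (- x) c = - tp a x c, forall k x, tp a (k *: x) c = k *: tp a x c &
   forall I (s : seq I) (F : I -> T), tp a (\sum_(i <- s) F i) c = \sum_(i <- s) tp a (F i) c].
Proof. case: htri => _ h _; exact: (@linfacts _ _ (fun x => tp a x c) (fun k x y => h k a x y c)). Qed.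
Lemma lin3 a b : [/\ tp a b 0 = 0, forall x y, tp a b (x + y) = tp a b x + tp a b y,
   forall x, tp a b (- x) = - tp a b x, forall k x, tp a b (k *: x) = k *: tp a b x &
   forall I (s : seq I) (F : I -> T), tp a b (\sum_(i <- s) F i) = \sum_(i <- s) tp a b (F i)].
Proof. case: htri => _ _ h; exact: (@linfacts _ _ (fun x => tp a b x) (fun k x y => h k a b x y)). Qed.

Lemma tp1D b c x y : tp (x + y) b c = tp x b c + tp y b c. Proof. by case: (lin1 b c). Qed.
Lemma tp1N b c x : tp (- x) b c = - tp x b c. Proof. by case: (lin1 b c). Qed.
Lemma tp1Z b c k x : tp (k *: x) b c = k *: tp x b c. Proof. by case: (lin1 b c). Qed.
Lemma tp1S b c I s (F : I -> T) : tp (\sum_(i <- s) F i) b c = \sum_(i <- s) tp (F i) b c.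
Proof. by case: (lin1 b c). Qed.
Lemma tp2D a c x y : tp a (x + y) c = tp a x c + tp a y c. Proof. by case: (lin2 a c). Qed.
Lemma tp2N a c x : tp a (- x) c = - tp a x c. Proof. by case: (lin2 a c). Qed.
Lemma tp2Z a c k x : tp a (k *: x) c = k *: tp a x c. Proof. by case: (lin2 a c). Qed.
Lemma tp2S a c I s (F : I -> T) : tp a (\sum_(i <- s) F i) c = \sum_(i <- s) tp a (F i) c.
Proof. by case: (lin2 a c). Qed.
Lemma tp3D a b x y : tp a b (x + y) = tp a b x + tp a b y. Proof. by case: (lin3 a b). Qed.
Lemma tp3N a b x : tp a b (- x) = - tp a b x. Proof. by case: (lin3 a b). Qed.
Lemma tp3Z a b k x : tp a b (k *: x) = k *: tp a b x. Proof. by case: (lin3 a b). Qed.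
Lemma tp3S a b I s (F : I -> T) : tp a b (\sum_(i <- s) F i) = \sum_(i <- s) tp a b (F i).
Proof. by case: (lin3 a b). Qed.

Definition Dl t x y := tp t x y - tp t y x.

Lemma idE1 a c x y z : tp (tp a c x) y z - tp (tp a c y) x z =
  tp (Dl a x y) c z + tp a (Dl c x y) z.
Proof.
rewrite /Dl tp1D tp1N tp2D tp2N !I1. zsolve.
Qed.

Lemma idD a b c x y : Dl (tp a b c) x y = tp (Dl a x y) b c + tp a (Dl b x y) c + tp a b (Dl c x y).
Proof.
rewrite /Dl tp1D tp1N tp2D tp2N tp3D tp3N !I1 !I2. zsolve.
Qed.

Lemma idE2 a c x y z : tp z (tp a c x) y - tp z (tp a c y) x - tp z y (tp a c x) + tp z x (tp a c y) =
  tp z (Dl a x y) c - tp z c (Dl a x y) + tp z a (Dl c x y) - tp z (Dl c x y) a.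
Proof.
have -> : tp z (Dl a x y) c - tp z c (Dl a x y) + tp z a (Dl c x y) - tp z (Dl c x y) a =
  (Dl (tp z a c) x y - tp (Dl z x y) a c) - (Dl (tp z c a) x y - tp (Dl z x y) c a).
  by rewrite !idD; zsolve.
rewrite /Dl !tp1D !tp1N !I1 !I2; zsolve.
Qed.

Variable H : L0 T -> Prop.

Lemma actrE t h : actr tp t h = \sum_(p <- h) Dl t p.1 p.2. Proof. by []. Qed.

Lemma br0E a c h : br0 tp [:: (a, c)] h =
  flatten [seq [:: (tp a c q.1, q.2); (- tp a c q.2, q.1)] | q <- h].
Proof. by rewrite /br0 /= cats0. Qed.

Lemma W1 al be ga a b c : Tw tp H al a -> Tw tp H be b -> Tw tp H ga c ->
  Tw tp H (add_rt (add_rt al be) ga) (tp a b c).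
Proof.
move=> ha hb hc h Hh; rewrite actrE.
under eq_bigr => p _ do rewrite idD.
rewrite !big_split /= -tp1S -tp2S -tp3S -!actrE ha // hb // hc //.
by rewrite tp1Z tp2Z tp3Z /add_rt !scalerDl.
Qed.

Lemma idE2' a c x y z : (tp z (tp a c x) y - tp z y (tp a c x)) + (tp z (- tp a c y) x - tp z x (- tp a c y)) =
  (tp z (Dl a x y) c - tp z c (Dl a x y)) + (tp z a (Dl c x y) - tp z (Dl c x y) a).
Proof.
transitivity (tp z (tp a c x) y - tp z (tp a c y) x - tp z y (tp a c x) + tp z x (tp a c y)).
  by rewrite tp2N tp3N; zsolve.
by rewrite idE2; zsolve.
Qed.

Lemma W0 al ga a c : Tw tp H al a -> Tw tp H ga c -> Lw tp H (add_rt al ga) [:: (a, c)].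
Proof.
move=> ha hc h Hh z; split.
- rewrite br0E /actl big_flatten /= big_map.
  under eq_bigr => q _ do rewrite !big_cons big_nil addr0 tp1N idE1.
  rewrite big_split /= -tp1S -tp2S -!actrE ha // hc //.
  by rewrite big_cons big_nil addr0 /= tp1Z tp1Z tp2Z /add_rt scalerDl.
- rewrite br0E /actr big_flatten /= big_map.
  under eq_bigr => q _ do rewrite !big_cons big_nil addr0 idE2'.
  rewrite big_split /= !sumrB -tp2S -tp3S -tp2S -tp3S -!actrE ha // hc //.
  rewrite !big_cons !big_nil !addr0 /= !tp2Z !tp3Z /add_rt !scalerDl.
  zsolve.
Qed.
End TP.


Section Roots.
Variables (K : fieldType) (T : lmodType K) (tp : T -> T -> T -> T) (H : L0 T -> Prop).
Hypothesis hsub : subalg tp H.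
Implicit Types x y z : L0 T -> K.

Let Heq h h' : H h -> L0eq tp h h' -> H h'. Proof. by case: hsub => _ _ _ h1 _; apply: h1. Qed.
Let Hadd h h' : H h -> H h' -> H (addL0 h h'). Proof. by case: hsub => _ h1 _ _ _; apply: h1. Qed.
Let Hscl c h : H h -> H (scl c h). Proof. by case: hsub => _ _ h1 _ _; apply: h1. Qed.

Lemma feq_sym x y : feq H x y -> feq H y x. Proof. by move=> e h Hh; rewrite e. Qed.
Lemma feq_trans x y z : feq H x y -> feq H y z -> feq H x z.
Proof. by move=> e1 e2 h Hh; rewrite e1 ?e2. Qed.

Lemma dual_feq x y : feq H x y -> dual tp H x -> dual tp H y.
Proof.
move=> e [d1 d2 d3]; split.
- by move=> h h' Hh E; rewrite -!e //; [apply: d1 | apply: Heq E].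
- by move=> h h' Hh Hh'; rewrite -!e //; [apply: d2 | apply: Hadd].
- by move=> c h Hh; rewrite -!e //; [apply: d3 | apply: Hscl].
Qed.

Lemma dual_add x y : dual tp H x -> dual tp H y -> dual tp H (add_rt x y).
Proof.
move=> [d1 d2 d3] [e1 e2 e3]; split; rewrite /add_rt.
- by move=> h h' Hh E; rewrite (d1 h h') // (e1 h h').
- by move=> h h' Hh Hh'; rewrite d2 // e2 // addrACA.
- by move=> c h Hh; rewrite d3 // e3 // mulrDr.
Qed.

Lemma dual_opp x : dual tp H x -> dual tp H (opp_rt x).
Proof.
move=> [d1 d2 d3]; split; rewrite /opp_rt.
- by move=> h h' Hh E; rewrite (d1 h h').
- by move=> h h' Hh Hh'; rewrite d2 // opprD.
- by move=> c h Hh; rewrite d3 // mulrN.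
Qed.

Lemma dual_zero : dual tp H (@zero_rt K T).
Proof. by split; rewrite /zero_rt // => *; rewrite ?addr0 ?mulr0. Qed.

Lemma nz_feq x y : feq H x y -> nonzero_rt H x -> nonzero_rt H y.
Proof. by move=> e [h [Hh nz]]; exists h; rewrite -e. Qed.

Lemma nz_of x : ~ feq H x (@zero_rt K T) -> nonzero_rt H x.
Proof.
move=> nf; apply: NNPP => nn; apply: nf => h Hh; apply: NNPP => ne; apply: nn.
by exists h; split => //; apply/eqP.
Qed.

Lemma nz_not x : nonzero_rt H x -> ~ feq H x (@zero_rt K T).
Proof. by move=> [h [Hh /eqP nz]] e; apply: nz; rewrite e. Qed.

Lemma Tw_feq x y t : feq H x y -> Tw tp H x t -> Tw tp H y t.
Proof. by move=> e tw h Hh; rewrite -e // tw. Qed.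

Lemma Lw_feq x y v : feq H x y -> Lw tp H x v -> Lw tp H y v.
Proof. by move=> e lw h Hh; rewrite -e //; apply: lw. Qed.

Lemma Lam1_feq x y : feq H x y -> Lam1 tp H x -> Lam1 tp H y.
Proof.
move=> e [d n [t [t0 tw]]]; split; first exact: dual_feq e d.
  exact: nz_feq e n.
by exists t; split => //; apply: Tw_feq e tw.
Qed.

Lemma Lam0_feq x y : feq H x y -> Lam0 tp H x -> Lam0 tp H y.
Proof.
move=> e [d n [v [v0 lw]]]; split; first exact: dual_feq e d.
  exact: nz_feq e n.
by exists v; split => //; apply: Lw_feq e lw.
Qed.

Lemma Lam1z_feq x y : feq H x y -> Lam1z tp H x -> Lam1z tp H y.
Proof.
move=> e [l|z]; first by left; apply: Lam1_feq e l.
by right; apply: feq_trans (feq_sym e) z.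
Qed.

Lemma Lam1z_dual x : Lam1z tp H x -> dual tp H x.
Proof.
case=> [[d _ _]|z] //; apply: dual_feq (feq_sym z) dual_zero.
Qed.

Lemma connected_feq al0 x y : feq H x y -> connected tp H al0 x -> connected tp H al0 y.
Proof.
move=> e [n [a [c1 c2 c3 c4 c5]]]; exists n, a; split => //.
case: c5 => f; [left | right]; first exact: feq_trans f e.
by apply: feq_trans f _ => h Hh; rewrite /opp_rt e.
Qed.

Lemma connected_opp al0 x : connected tp H al0 x -> connected tp H al0 (opp_rt x).
Proof.
move=> [n [a [c1 c2 c3 c4 c5]]]; exists n, a; split => //.
case: c5 => f; [right | left] => h Hh; rewrite f // /opp_rt ?opprK //.
Qed.


Lemma psum_low (a a' : nat -> L0 T -> K) m : (forall i, (i < m)%N -> a' i = a i) ->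
  forall k, (k <= m)%N -> feq H (psum a' k) (psum a k).
Proof.
move=> e k km h Hh; rewrite /psum; apply: eq_bigr => i _; rewrite e //.
exact: leq_trans (ltn_ord i) km.
Qed.

Lemma psumS (a : nat -> L0 T -> K) k h : psum a k.+1 h = psum a k h + a k h.
Proof. by rewrite /psum big_ord_recr. Qed.

Lemma step_pos al0 x y z n (a : nat -> L0 T -> K) :
  (forall i, (i <= n.*2)%N -> Lam1z tp H (a i)) ->
  (forall k, (k <= n)%N -> Lam1 tp H (psum a (k.*2.+1))) ->
  (forall k, (1 <= k <= n)%N -> Lam0 tp H (psum a (k.*2))) ->
  feq H (a 0%N) al0 -> feq H (psum a (n.*2.+1)) x ->
  Lam1z tp H y -> Lam1z tp H z -> Lam0 tp H (add_rt x y) ->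
  Lam1 tp H (add_rt (add_rt x y) z) -> connected tp H al0 (add_rt (add_rt x y) z).
Proof.
move=> c1 c2 c3 c4 c5 hy hz h0 h1.
pose a' := fun i => if i == n.*2.+1 then y else if i == n.*2.+2 then z else a i.
have low : forall k, (k <= n.*2.+1)%N -> feq H (psum a' k) (psum a k).
  apply: psum_low => i hi; rewrite /a' ifN; last by rewrite neq_ltn hi.
  by rewrite ifN // neq_ltn ltnS ltnW.
have e2 : feq H (psum a' (n.*2.+2)) (add_rt x y).
  move=> h Hh; rewrite psumS low // c5 // /a' eqxx.
  by [].
have e3 : feq H (psum a' (n.*2.+3)) (add_rt (add_rt x y) z).
  move=> h Hh; rewrite psumS e2 // /a' ifN ?eqxx //.
  by rewrite neq_ltn ltnSn orbT.
exists n.+1, a'; rewrite doubleS; split.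
- move=> i hi; rewrite /a'; case: ifP => [_|ne1]; first exact: hy.
  case: ifP => [_|ne2]; first exact: hz.
  apply: c1; move/negbT: ne1; move/negbT: ne2; move: hi; clear; lia.
- move=> k kn; case: (ltnP n k) => [nk|kn'].
    have -> : k = n.+1 by lia.
    by rewrite doubleS; apply: Lam1_feq (feq_sym e3) h1.
  apply: Lam1_feq (feq_sym (low _ _)) (c2 _ kn'); lia.
- move=> k /andP [k1 kn]; case: (ltnP n k) => [nk|kn'].
    have -> : k = n.+1 by lia.
    by rewrite doubleS; apply: Lam0_feq (feq_sym e2) h0.
  apply: Lam0_feq (feq_sym (low _ _)) (c3 _ _); [lia | by rewrite k1 kn'].
- by rewrite /a'.
- by left.
Qed.
End Roots.


Section Main.
Variables (K : fieldType) (T : lmodType K) (tp : T -> T -> T -> T) (H : L0 T -> Prop).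
Hypothesis hLTS : LTS tp.
Hypothesis hsub : subalg tp H.
Hypothesis hsym1 : forall al, Lam1 tp H al -> Lam1 tp H (opp_rt al).
Hypothesis hsym0 : forall al, Lam0 tp H al -> Lam0 tp H (opp_rt al).
Variable al0 : L0 T -> K.
Implicit Types x y z : L0 T -> K.

Local Notation conn x := (connected tp H al0 x).
Local Notation zr := (@zero_rt K T).
Definition Lam0z x := Lam0 tp H x \/ feq H x zr.

Lemma Lam0z_feq x y : feq H x y -> Lam0z x -> Lam0z y.
Proof.
move=> e [l|z]; first by left; apply: (Lam0_feq hsub) e l.
by right; apply: feq_trans (feq_sym e) z.
Qed.

Lemma Lam1z_opp x : Lam1z tp H x -> Lam1z tp H (opp_rt x).
Proof.
case=> [l|z]; first by left; apply: hsym1.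
by right => h Hh; rewrite /opp_rt z // /zero_rt oppr0.
Qed.

Lemma step x y z : conn x -> Lam1z tp H y -> Lam1z tp H z -> Lam0 tp H (add_rt x y) ->
  Lam1 tp H (add_rt (add_rt x y) z) -> conn (add_rt (add_rt x y) z).
Proof.
move=> [n [a [c1 c2 c3 c4 [c5|c5]]]] hy hz h0 h1; first exact: (step_pos hsub c1) c2 c3 c4 c5 hy hz h0 h1.
have := (step_pos hsub c1) c2 c3 c4 c5 (Lam1z_opp hy) (Lam1z_opp hz).
have ex1 : feq H (opp_rt (add_rt x y)) (add_rt (opp_rt x) (opp_rt y)).
  by move=> h _; rewrite /opp_rt /add_rt opprD.
have ex2 : feq H (opp_rt (add_rt (add_rt x y) z)) (add_rt (add_rt (opp_rt x) (opp_rt y)) (opp_rt z)).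
  by move=> h _; rewrite /opp_rt /add_rt !opprD.
have l0 := Lam0_feq hsub ex1 (hsym0 h0).
have l1 := Lam1_feq hsub ex2 (hsym1 h1).
move=> /(_ l0 l1) cn.
have := connected_opp (connected_feq (feq_sym ex2) cn).
by apply: connected_feq => h _; rewrite /opp_rt opprK.
Qed.

Lemma conn_oppz x y : conn x -> feq H (add_rt x y) zr -> conn y.
Proof.
move=> cx e; apply: connected_feq (connected_opp cx) => h Hh.
by move: (e h Hh); rewrite /add_rt /zero_rt /opp_rt => /eqP; rewrite addr_eq0 => /eqP ->; rewrite opprK.
Qed.

Lemma back x y : Lam1 tp H x -> conn x -> Lam1 tp H y -> Lam0z (add_rt x y) -> conn y.
Proof.
move=> lx cx ly [l0|z]; last exact: conn_oppz cx z.
have e : feq H (add_rt (add_rt x y) (opp_rt x)) y.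
  by move=> h _; rewrite /add_rt /opp_rt addrAC subrr add0r.
apply: (connected_feq e); apply: step => //; first by left.
  by left; apply: hsym1.
exact: (Lam1_feq hsub) (feq_sym e) ly.
Qed.

Lemma via0 x y : Lam1 tp H x -> conn x -> Lam0 tp H x -> Lam0 tp H y ->
  Lam1z tp H (add_rt x y) -> Lam1 tp H y -> conn y.
Proof.
move=> lx cx l0x l0y [l1|z] ly; last exact: conn_oppz cx z.
have e1 : feq H (add_rt (add_rt x zr) y) (add_rt x y) by move=> h _; rewrite /add_rt /zero_rt addr0.
have c1 : conn (add_rt x y).
  apply: (connected_feq e1); apply: step => //; try by [right | left].
    by apply: (Lam0_feq hsub _ l0x) => h _; rewrite /add_rt /zero_rt addr0.
  exact: (Lam1_feq hsub) (feq_sym e1) l1.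
have e2 : feq H (add_rt (add_rt (add_rt x y) (opp_rt x)) zr) y.
  by move=> h _; rewrite /add_rt /opp_rt /zero_rt addr0 addrAC subrr add0r.
apply: (connected_feq e2); apply: step => //; try by [right | left].
- by left; apply: hsym1.
- by apply: (Lam0_feq hsub _ l0y) => h _; rewrite /add_rt /opp_rt addrAC subrr add0r.
- exact: (Lam1_feq hsub) (feq_sym e2) ly.
Qed.

Lemma wt1 al be ga a b c : dual tp H al -> dual tp H be -> dual tp H ga ->
  Tw tp H al a -> Tw tp H be b -> Tw tp H ga c -> tp a b c != 0 ->
  Lam1z tp H (add_rt (add_rt al be) ga).
Proof.
move=> d1 d2 d3 t1 t2 t3 nz; case: (classic (feq H (add_rt (add_rt al be) ga) zr)) => e.
  by right.
left; split; first by do 2 apply: dual_add => //.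
  exact: nz_of.
by exists (tp a b c); split => //; apply: W1.
Qed.

Lemma wt0 al ga a c : dual tp H al -> dual tp H ga ->
  Tw tp H al a -> Tw tp H ga c -> ~ L0eq tp [:: (a, c)] [::] -> Lam0z (add_rt al ga).
Proof.
move=> d1 d3 t1 t3 nz; case: (classic (feq H (add_rt al ga) zr)) => e.
  by right.
left; split; first by apply: dual_add.
  exact: nz_of.
by exists [:: (a, c)]; split => //; apply: W0.
Qed.

Lemma nz_actl a c (u : T) : tp a c u != 0 -> ~ L0eq tp [:: (a, c)] [::].
Proof.
move=> nz E; have [e _] := E u; move: e; rewrite /actl big_cons !big_nil addr0 /= => e.
by rewrite e eqxx in nz.
Qed.

Lemma nz_actr w a c : tp w a c - tp w c a != 0 -> ~ L0eq tp [:: (a, c)] [::].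
Proof.
move=> nz E; have [_ e] := E w; move: e; rewrite /actr big_cons !big_nil addr0 /= => e.
by rewrite e eqxx in nz.
Qed.

Lemma decomp a b c : tp a b c != 0 -> tp a c b != 0 \/ tp a b c - tp a c b != 0.
Proof. by case: (eqVneq (tp a c b) 0) => e; [right; rewrite e subr0 | left]. Qed.

Definition inz x := Lam1_conn tp H al0 x \/ feq H x zr.

Lemma inz_of x : Lam1z tp H x -> (Lam1 tp H x -> conn x) -> inz x.
Proof. by case=> [l|z] C; [left; split => //; apply: C | right]. Qed.


Lemma fC x y : feq H (add_rt x y) (add_rt y x). Proof. by move=> h _; rewrite /add_rt addrC. Qed.
Lemma fz_r {x y} : feq H y zr -> feq H (add_rt x y) x.
Proof. by move=> e h Hh; rewrite /add_rt e // /zero_rt addr0. Qed.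
Lemma fz_l {x y} : feq H x zr -> feq H (add_rt x y) y.
Proof. by move=> e h Hh; rewrite /add_rt e // /zero_rt add0r. Qed.
Lemma fz_add {x y} : feq H x zr -> feq H y zr -> feq H (add_rt x y) zr.
Proof. by move=> e1 e2 h Hh; rewrite /add_rt e1 // e2 // /zero_rt addr0. Qed.
Lemma fA x y z : feq H (add_rt (add_rt x y) z) (add_rt (add_rt x z) y).
Proof. by move=> h _; rewrite /add_rt addrAC. Qed.
Lemma fCl x y z : feq H (add_rt (add_rt x y) z) (add_rt (add_rt y x) z).
Proof. by move=> h _; rewrite /add_rt (addrC (x h)). Qed.

Lemma nz_lam1 x : Lam1 tp H x -> ~ feq H x zr.
Proof. by case=> _ n _; apply: nz_not. Qed.

Lemma dual1 x : Lam1 tp H x -> dual tp H x. Proof. by case. Qed.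

Lemma inz_feq x y : feq H x y -> inz x -> inz y.
Proof.
move=> e [[l c]|z]; first by left; split; [apply: (Lam1_feq hsub e l) | apply: (connected_feq e c)].
by right; apply: feq_trans (feq_sym e) z.
Qed.

Lemma gam_b al be ga b c : Lam1 tp H al -> conn al -> Lam1z tp H be -> Lam1 tp H ga ->
  (Lam1 tp H be -> conn be) -> Lam0z (add_rt al be) -> Lam1z tp H (add_rt (add_rt al be) ga) ->
  Tw tp H be b -> Tw tp H ga c -> ~ L0eq tp [:: (b, c)] [::] -> conn ga.
Proof.
move=> lal cal hbe lga Cbe wab wabc tb tc nbc.
have wbc := wt0 (Lam1z_dual hsub hbe) (dual1 lga) tb tc nbc.
case: hbe => [lbe|zbe]; first exact: back lbe (Cbe lbe) lga wbc.
have l0al : Lam0 tp H al.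
  case: wab => [l|z]; first by apply: (Lam0_feq hsub _ l); apply: fz_r.
  by exfalso; apply: (nz_lam1 lal); exact: (feq_trans (feq_sym (fz_r zbe)) z).
have l0ga : Lam0 tp H ga.
  case: wbc => [l|z]; first exact: (Lam0_feq hsub (fz_l zbe) l).
  by exfalso; apply: (nz_lam1 lga); exact: (feq_trans (feq_sym (fz_l zbe)) z).
have w : Lam1z tp H (add_rt al ga).
  apply: (Lam1z_feq hsub _ wabc) => h Hh; rewrite /add_rt zbe // /zero_rt addr0 //.
exact: via0 lal cal l0al l0ga w lga.
Qed.

Lemma case1 al be ga a b c : Lam1 tp H al -> conn al -> Lam1z tp H be -> Lam1z tp H ga ->
  Tw tp H al a -> Tw tp H be b -> Tw tp H ga c -> tp a b c != 0 ->
  [/\ inz be, inz ga & inz (add_rt (add_rt al be) ga)].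
Proof.
move=> lal cal hbe hga ta tb tc nz.
have dal := dual1 lal; have dbe := Lam1z_dual hsub hbe; have dga := Lam1z_dual hsub hga.
have wab : Lam0z (add_rt al be) := wt0 dal dbe ta tb (nz_actl nz).
have wabc := wt1 dal dbe dga ta tb tc nz.
have Cbe : Lam1 tp H be -> conn be := fun l => back lal cal l wab.
have Cga : Lam1 tp H ga -> conn ga.
  move=> lga; case: (decomp nz) => [nz2|nz2].
    exact: back lal cal lga (wt0 dal dga ta tc (nz_actl nz2)).
  exact: gam_b lal cal hbe lga Cbe wab wabc tb tc (nz_actr nz2).
split; [exact: (inz_of hbe Cbe) | exact: (inz_of hga Cga) | apply: (inz_of wabc) => l].
case: wab => [l0|z0]; first by apply: step => //; left.
have e := fz_l (y := ga) z0.
exact: (connected_feq (feq_sym e) (Cga (Lam1_feq hsub e l))).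
Qed.

Lemma case2 al be ga a b c : Lam1 tp H al -> conn al -> Lam1z tp H be -> Lam1z tp H ga ->
  Tw tp H al a -> Tw tp H be b -> Tw tp H ga c -> tp b a c != 0 ->
  [/\ inz be, inz ga & inz (add_rt (add_rt be al) ga)].
Proof.
move=> lal cal hbe hga ta tb tc nz.
have dal := dual1 lal; have dbe := Lam1z_dual hsub hbe; have dga := Lam1z_dual hsub hga.
have wab : Lam0z (add_rt al be) := Lam0z_feq (fC _ _) (wt0 dbe dal tb ta (nz_actl nz)).
have wbac := wt1 dbe dal dga tb ta tc nz.
have wabc := Lam1z_feq hsub (fCl _ _ _) wbac.
have Cbe : Lam1 tp H be -> conn be := fun l => back lal cal l wab.
have Cga : Lam1 tp H ga -> conn ga.
  move=> lga; case: (decomp nz) => [nz2|nz2].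
    exact: gam_b lal cal hbe lga Cbe wab wabc tb tc (nz_actl nz2).
  exact: back lal cal lga (wt0 dal dga ta tc (nz_actr nz2)).
split; [exact: (inz_of hbe Cbe) | exact: (inz_of hga Cga) | apply: (inz_of wbac) => l].
case: wab => [l0|z0].
  apply: (connected_feq (fCl _ _ _)); apply: step => //.
  exact: (Lam1_feq hsub (fCl _ _ _) l).
have e : feq H (add_rt (add_rt be al) ga) ga.
  apply: fz_l; apply: feq_trans (fC _ _) z0.
exact: (connected_feq (feq_sym e) (Cga (Lam1_feq hsub e l))).
Qed.

Lemma case3 al be ga a b c : Lam1 tp H al -> conn al -> Lam1z tp H be -> Lam1z tp H ga ->
  Tw tp H al a -> Tw tp H be b -> Tw tp H ga c -> tp b c a != 0 ->
  [/\ inz be, inz ga & inz (add_rt (add_rt be ga) al)].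
Proof.
move=> lal cal hbe hga ta tb tc nz.
case: (decomp nz) => [nz2|nz2].
  have [i1 i2 i3] := case2 lal cal hbe hga ta tb tc nz2.
  split => //; apply: inz_feq i3; exact: fA.
have dal := dual1 lal; have dbe := Lam1z_dual hsub hbe; have dga := Lam1z_dual hsub hga.
have wag : Lam0z (add_rt al ga) := Lam0z_feq (fC _ _) (wt0 dga dal tc ta (nz_actr nz2)).
have wbc := wt0 dbe dga tb tc (nz_actl nz).
have wbca := wt1 dbe dga dal tb tc ta nz.
have Cga : Lam1 tp H ga -> conn ga := fun l => back lal cal l wag.
have Cbe : Lam1 tp H be -> conn be.
  move=> lbe; case: wbc => [l0|z0].
    case: hga => [lga|zga].
      exact: back lga (Cga lga) lbe (Lam0z_feq (fC _ _) (or_introl l0)).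
    have l0be : Lam0 tp H be := Lam0_feq hsub (fz_r zga) l0.
    have l0al : Lam0 tp H al.
      case: wag => [l|z]; first exact: (Lam0_feq hsub (fz_r zga) l).
      by exfalso; apply: (nz_lam1 lal); exact: (feq_trans (feq_sym (fz_r zga)) z).
    have w : Lam1z tp H (add_rt al be).
      apply: (Lam1z_feq hsub _ wbca) => h Hh; rewrite /add_rt zga // /zero_rt addr0 addrC //.
    exact: via0 lal cal l0al l0be w lbe.
  case: hga => [lga|zga].
    exact: conn_oppz (Cga lga) (feq_trans (fC _ _) z0).
  by exfalso; apply: (nz_lam1 lbe); exact: (feq_trans (feq_sym (fz_r zga)) z0).
split; [exact: (inz_of hbe Cbe) | exact: (inz_of hga Cga) | apply: (inz_of wbca) => l].
case: wag => [l0|z0].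
  have e : feq H (add_rt (add_rt al ga) be) (add_rt (add_rt be ga) al).
    by move=> h _; rewrite /add_rt; ring.
  apply: (connected_feq e); apply: step => //.
  exact: (Lam1_feq hsub (feq_sym e) l).
have e : feq H (add_rt (add_rt be ga) al) be.
  by move=> h Hh; move: (z0 h Hh); rewrite /add_rt /zero_rt => z1; rewrite -addrA (addrC (ga h)) z1 addr0.
exact: (connected_feq (feq_sym e) (Cbe (Lam1_feq hsub e l))).
Qed.

End Main.

Theorem lemma3p3 (K : fieldType) (T : lmodType K) (tp : T -> T -> T -> T)
  (H : L0 T -> Prop)
  (hLTS : LTS tp)
  (hsplit : split_wrt tp H)
  (hsym1 : forall al, Lam1 tp H al -> Lam1 tp H (opp_rt al))
  (hsym0 : forall al, Lam0 tp H al -> Lam0 tp H (opp_rt al))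
  (al0 al be ga : L0 T -> K)
  (hal0 : Lam1 tp H al0)
  (hal : Lam1_conn tp H al0 al)
  (hbe : Lam1z tp H be) (hga : Lam1z tp H ga) :
  let inz x := Lam1_conn tp H al0 x \/ feq H x (@zero_rt K T) in
  [/\ prod_nz tp H al be ga -> [/\ inz be, inz ga & inz (add_rt (add_rt al be) ga)],
      prod_nz tp H be al ga -> [/\ inz be, inz ga & inz (add_rt (add_rt be al) ga)]
    & prod_nz tp H be ga al -> [/\ inz be, inz ga & inz (add_rt (add_rt be ga) al)]].
Proof.
move=> inz; rewrite {}/inz.
have hsub : subalg tp H by case: hsplit => [[]].
case: hal => lal cal.
split=> [[a [b [c [ta tb tc nz]]]]|[b [a [c [tb ta tc nz]]]]|[b [c [a [tb tc ta nz]]]]].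
- exact: (case1 hLTS hsub hsym1 hsym0 lal cal hbe hga ta tb tc nz).
- exact: (case2 hLTS hsub hsym1 hsym0 lal cal hbe hga ta tb tc nz).
- exact: (case3 hLTS hsub hsym1 hsym0 lal cal hbe hga ta tb tc nz).
Qed.
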